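(* For every integer $n\ge 6$, $q(K_{1,1,n-2}^+)>n+2-\frac{4}{n+2}$.
   Context: $q(G)$ denotes the largest eigenvalue of the signless Laplacian matrix $Q(G)=D(G)+A(G)$ of a graph $G$, where $A(G)$ is the adjacency matrix and $D(G)$ the diagonal degree matrix. $K_{1,1,n-2}$ is the complete tripartite graph with parts of sizes $1,1,n-2$, and $K_{1,1,n-2}^+$ is obtained from it by adding one edge inside the part of size $n-2$. *)

(* Defs.v *)
From HB Require Import structures.
From mathcomp Require Import all_boot all_order all_algebra.
Unset Printing Implicit Defensive.
Import Order.TTheory GRing.Theory Num.Theory.
Local Open Scope ring_scope.

(* A simple graph on vertex set 'I_n is a symmetric irreflexive rel. *)

(* K_{1,1,n-2}^+ on vertices 0..n-1: parts {0}, {1}, {2,...,n-1};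
   every pair of vertices in different parts is adjacent, and one extra
   edge {2,3} is added inside the part of size n-2. *)
Definition K11plus (n : nat) : rel 'I_n :=
  fun i j => (i != j) &&
    [|| (i < 2)%N, (j < 2)%N,
        (nat_of_ord i == 2%N) && (nat_of_ord j == 3%N)
      | (nat_of_ord i == 3%N) && (nat_of_ord j == 2%N)].

Definition adjmx (R : nzRingType) (n : nat) (e : rel 'I_n) : 'M[R]_n :=
  \matrix_(i, j) (e i j)%:R.

Definition degmx (R : nzRingType) (n : nat) (e : rel 'I_n) : 'M[R]_n :=
  \matrix_(i, j) (if i == j then (#|[set k | e i k]|)%:R else 0).

Definition signless_laplacian (R : nzRingType) (n : nat) (e : rel 'I_n)
  : 'M[R]_n := degmx R n e + adjmx R n e.

Definition is_largest_eigenvalue (R : realFieldType) (n : nat)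
  (A : 'M[R]_n) (l : R) : Prop :=
  eigenvalue A l /\ (forall m, eigenvalue A m -> m <= l).

(* Main.v *)
Require Import Defs.
From HB Require Import structures.
From mathcomp Require Import all_boot all_order all_algebra.
From mathcomp Require Import ring lra zify.
From mathcomp Require Import polyrcf.
Import Order.TTheory GRing.Theory Num.Theory.
Local Open Scope ring_scope.

Definition Enat (i j : nat) : bool := (i != j) &&
    [|| (i < 2)%N, (j < 2)%N, (i == 2%N) && (j == 3%N) | (i == 3%N) && (j == 2%N)].

Lemma Esym i j : Enat i j = Enat j i.
Proof.
rewrite /Enat eq_sym.
by case: (i < 2)%N; case: (j < 2)%N; case: (i == 2%N); case: (j == 3%N);
   case: (i == 3%N); case: (j == 2%N).
Qed.

Lemma EnatHi k j : (4 <= k)%N -> Enat k j = (j < 2)%N.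
Proof.
move=> hk; rewrite /Enat.
rewrite (_ : (k < 2)%N = false); last by lia.
rewrite (_ : (k == 2%N) = false); last by lia.
rewrite (_ : (k == 3%N) = false); last by lia.
rewrite /= orbF.
case: (ltnP j 2) => hj; last by rewrite andbF.
rewrite andbT; apply/eqP; lia.
Qed.

Definition w {R : nzRingType} (a b c : R) (j : nat) : R :=
  if (j < 2)%N then a else if (j < 4)%N then b else c.

Lemma vQ (R : rcfType) n (mu a b c : R) : (4 <= n)%N ->
 mu * a = n%:R * a + 2 * b + (n%:R - 4) * c ->
 mu * b = 2 * a + 4 * b -> mu * c = 2 * a + 2 * c ->
 (\row_(j < n) w a b c j) *m signless_laplacian R n (K11plus n)
   = mu *: (\row_(j < n) w a b c j).
Proof.
move=> h4 hA hB hC.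
have deg : forall i : 'I_n,
    (#|[set k | K11plus n i k]|)%:R = \sum_(k < n) ((Enat k i)%:R : R).
  move=> i; rewrite -sum1_card big_mkcond /= natr_sum; apply: eq_bigr => k _.
  by rewrite inE /K11plus -/(Enat _ _) Esym; case: (Enat _ _).
apply/rowP => j; rewrite !mxE.
under eq_bigr => i _ do rewrite !mxE mulrDr.
rewrite big_split /=.
rewrite (_ : \sum_(i < n) _ = w a b c j * \sum_(k < n) ((Enat k j)%:R : R)); last first.
  rewrite -deg (bigD1 j) //= eqxx big1 ?addr0 // => i /negbTE ->.
  by rewrite mulr0.
rewrite mulr_sumr -big_split /=.
rewrite -(big_mkord xpredT (fun k => w a b c j * (Enat k j)%:R + w a b c k * (Enat k j)%:R)).
case: j => j hj /=.
rewrite (big_cat_nat (leq0n 4) h4) /=.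
rewrite [X in _ + X = _](eq_big_nat _ _ (F2 := fun _ => (w a b c j * (j < 2)%N%:R + c * (j < 2)%N%:R))); last first.
  move=> k /andP[hk _]; rewrite EnatHi // /w.
  have -> : (k < 2)%N = false by apply/negbTE; rewrite -leqNgt (leq_trans _ hk).
  by have -> : (k < 4)%N = false by apply/negbTE; rewrite -leqNgt.
rewrite sumr_const_nat (big_ltn (isT : (0 < 4)%N)) (big_ltn (isT : (1 < 4)%N)).
rewrite (big_ltn (isT : (2 < 4)%N)) (big_ltn (isT : (3 < 4)%N)) big_geq // addr0.
rewrite -[_ *+ (n - 4)]mulr_natr natrB //.
case: j hj => [|[|[|[|j]]]] hj; rewrite /w /Enat /=.
- by rewrite hA; ring.
- by rewrite hA; ring.
- by rewrite hB; ring.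
- by rewrite hB; ring.
- by rewrite hC; ring.
Qed.

Definition fmax {R : realDomainType} (x0 : R) (s : seq R) : R :=
  foldr (fun x y => if x <= y then y else x) x0 s.

Lemma fmax_in (R : realDomainType) (x0 : R) s : fmax x0 s \in x0 :: s.
Proof.
elim: s => [|y s IH] /=; first by rewrite inE eqxx.
case: ifP => _; last by rewrite !inE eqxx orbT.
by move: IH; rewrite /fmax !inE => /orP[->|->]; rewrite ?orbT.
Qed.

Lemma fmax_ge (R : realDomainType) (x0 : R) s x : x \in x0 :: s -> x <= fmax x0 s.
Proof.
elim: s x => [|y s IH] x /=; first by rewrite inE => /eqP ->.
rewrite /fmax /= -/(fmax x0 s).
move=> hx; case: ifP => hy.
  move: hx; rewrite !inE => /orP[/eqP->|/orP[/eqP->|hx]] //.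
  - by apply: IH; rewrite inE eqxx.
  - by apply: IH; rewrite inE hx orbT.
have hy' : fmax x0 s <= y by apply: ltW; rewrite ltNge hy.
move: hx; rewrite !inE => /orP[/eqP->|/orP[/eqP->|hx]] //.
  - by apply: le_trans hy'; apply: IH; rewrite inE eqxx.
  - by apply: le_trans hy'; apply: IH; rewrite inE hx orbT.
Qed.

Arguments fmax_in {R}.
Arguments fmax_ge {R}.

Theorem lemma2p8 (R : rcfType) (n : nat) :
  (6 <= n)%N ->
  (exists l, is_largest_eigenvalue R n (signless_laplacian R n (K11plus n)) l) /\
  (forall l : R, is_largest_eigenvalue R n (signless_laplacian R n (K11plus n)) l ->
     n%:R + 2 - 4 / (n%:R + 2) < l).
Proof.
move=> h6.
set Q := signless_laplacian R n (K11plus n).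
set N : R := n%:R.
have hN : 6 <= N by rewrite /N (ler_nat R 6 n).
set t0 := N + 2 - 4 / (N + 2).
have ht0 : 4 < t0.
  have : 4 / (N + 2) <= 1 by rewrite ler_pdivrMr; lra.
  rewrite /t0; lra.
pose p : {poly R} := ('X - N%:P) * ('X - 2%:P) * ('X - 4%:P) - 4%:P * ('X - 2%:P)
   - (2 * (N - 4))%:P * ('X - 4%:P).
have pE : forall x, p.[x] = (x - N) * (x - 2) * (x - 4) - 4 * (x - 2) - 2 * (N - 4) * (x - 4).
  by move=> x; rewrite /p !hornerE.
have pt0 : p.[t0] < 0.
  rewrite pE.
  have -> : (t0 - N) * (t0 - 2) * (t0 - 4) - 4 * (t0 - 2) - 2 * (N - 4) * (t0 - 4)
     = - (8 * N^+3 + 32 * N^+2 + 96 * N + 192) / (N + 2)^+3.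
    rewrite /t0; field; lra.
  rewrite mulNr oppr_lt0; apply: divr_gt0; last by apply: exprn_gt0; lra.
  have : 0 <= N^+3 by apply: exprn_ge0; lra.
  have : 0 <= N^+2 by apply: exprn_ge0; lra.
  lra.
have pT : 0 < p.[N + 2].
  rewrite pE; have -> : (N + 2 - N) * (N + 2 - 2) * (N + 2 - 4) - 4 * (N + 2 - 2)
      - 2 * (N - 4) * (N + 2 - 4) = 4 * N - 16 by ring.
  lra.
have hd : 0 < 4 / (N + 2) by apply: divr_gt0; lra.
have [mu hmu hr] := @poly_ivt R p t0 (N + 2) ltac:(rewrite /t0; lra)
  ltac:(by rewrite (ltW pt0) (ltW pT)).
have hmu0 : t0 < mu.
  move: hmu => /andP[h1 _]. rewrite lt_neqAle h1 andbT.
  by apply/eqP => ht; move: hr; rewrite /root -ht (lt_eqF pt0).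
have hf : (mu - N) * (mu - 2) * (mu - 4) - 4 * (mu - 2) - 2 * (N - 4) * (mu - 4) = 0.
  by rewrite -pE; apply/eqP.
have eigmu : eigenvalue Q mu.
  apply/eigenvalueP.
  exists (\row_(j < n) w ((mu - 2) * (mu - 4)) (2 * (mu - 2)) (2 * (mu - 4)) j).
    apply: vQ; first by apply: leq_trans h6.
    - apply/eqP; rewrite -subr_eq0 -hf; apply/eqP; rewrite /N; ring.
    - ring.
    - ring.
  apply/negP => /eqP hv.
  have := congr1 (fun M : 'rV[R]_n => M 0 (Ordinal (leq_trans (isT : (0 < 6)%N) h6))) hv.
  rewrite !mxE /w /=; apply/eqP; apply: mulf_neq0; rewrite subr_eq0; apply/eqP; lra.
have key : forall l, is_largest_eigenvalue R n Q l -> t0 < l.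
  by move=> l [_ hl]; apply: lt_le_trans hmu0 (hl _ eigmu).
split; last exact: key.
have p0 : char_poly Q != 0 by apply: monic_neq0; apply: char_poly_monic.
have hroots := roots_on_rootsR p0.
exists (fmax mu (rootsR (char_poly Q))); split.
  have := fmax_in mu (rootsR (char_poly Q)); rewrite inE => /orP[/eqP->//|hin].
  by rewrite eigenvalue_root_char; move: hin; rewrite -hroots => /andP[].
move=> m hm; apply: fmax_ge; rewrite inE -hroots.
by rewrite -eigenvalue_root_char hm orbT.
Qed.
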